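(* Let $\overline{\mathcal{O}}=\prod_t\overline{\mathcal{O}}_t$ and $\varphi$ be as in the context, let $K$ be any complete non-Archimedean field and let $\mathbf{\Gamma}:\overline{\mathcal{O}}\to K$ be a continuous non-vanishing function. Then $H:\overline{\mathcal{O}}\to K$ is a continuous non-vanishing function satisfying, for all $n\in\mathbb{N}$ and all $\mathbf{x}\in\overline{\mathcal{O}}$ with $\varphi^{(n)}(-\mathbf{x})=-\mathbf{x}$, $$\prod_{j=0}^{n-1}\mathbf{\Gamma}\left(-\varphi^{(j)}(-\mathbf{x})\right)=\prod_{j=0}^{n-1}H\left(-\varphi^{(j)}(-\mathbf{x})\right),$$ if and only if there exists a continuous non-vanishing function $G:\overline{\mathcal{O}}\to K$ such that $H(\mathbf{x})=\mathbf{\Gamma}(\mathbf{x})\cdot\dfrac{G(\mathbf{x})}{G(-\varphi(-\mathbf{x}))}$ for all $\mathbf{x}\in\overline{\mathcal{O}}$.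
   Context: $\overline{\mathcal{O}}$ is a direct product of finitely many rings $\overline{\mathcal{O}}_t$, each the ring of integers of a non-Archimedean local field with a fixed uniformizer. For each $t$, $\pi_t\in\overline{\mathcal{O}}_t$ is a fixed positive power of that uniformizer and $S_t\subseteq\overline{\mathcal{O}}_t$ a fixed complete set of representatives of $\overline{\mathcal{O}}_t/(\pi_t)$. Each $\mathbf{x}_t\in\overline{\mathcal{O}}_t$ is written uniquely as $\sum_{i\ge0}x_{t,i}\pi_t^i$ with $x_{t,i}\in S_t$; define $\varphi_t(\mathbf{x}_t)=\sum_{i\ge0}x_{t,i+1}\pi_t^i$ and $\varphi(\mathbf{x})=(\varphi_t(\mathbf{x}_t))_t$ for $\mathbf{x}=(\mathbf{x}_t)_t$; $\varphi^{(j)}$ denotes the $j$-fold iterate. *)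

(* Defs.v *)
From HB Require Import structures.
From mathcomp Require Import all_boot all_order all_algebra.
From mathcomp Require Import reals.
From Stdlib Require Import ClassicalEpsilon.
Set Implicit Arguments. Unset Strict Implicit. Unset Printing Implicit Defensive.
Import Order.TTheory GRing.Theory Num.Theory.
Local Open Scope ring_scope.

Definition dvdR {R : comRingType} (a b : R) : Prop := exists c : R, b = c * a.

(* The ring of integers of a non-Archimedean local field, together with a
   fixed uniformizer [unif]: a complete discrete valuation ring with finite
   residue field. *)
Record localInt := LocalInt {
  lcarrier :> idomainType;
  unif : lcarrier;
  unif_neq0 : unif != 0;
  unif_nonunit : unif \isn't a GRing.unit;
  unif_dvr : forall x : lcarrier, x != 0 ->
     exists u : lcarrier, exists k : nat, u \is a GRing.unit /\ x = u * unif ^+ k;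
  residue_finite : exists s : seq lcarrier,
     forall x : lcarrier, exists2 a, a \in s & dvdR unif (x - a);
  unif_complete : forall u : nat -> lcarrier,
     (forall n : nat, exists N : nat, forall m : nat, (N <= m)%N ->
         dvdR (unif ^+ n) (u m - u N)) ->
     exists l : lcarrier, forall n : nat, exists N : nat, forall m : nat,
         (N <= m)%N -> dvdR (unif ^+ n) (u m - l)
}.

Record naField (R : realType) := NAField {
  kcarrier :> fieldType;
  kabs : kcarrier -> R;
  kabs_ge0 : forall x, 0 <= kabs x;
  kabs_eq0 : forall x, kabs x = 0 <-> x = 0;
  kabsM : forall x y, kabs (x * y) = kabs x * kabs y;
  kabs_ultra : forall x y, kabs (x + y) <= Num.max (kabs x) (kabs y);
  kcomplete : forall u : nat -> kcarrier,
     (forall e : R, 0 < e -> exists N : nat, forall m n : nat,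
         (N <= m)%N -> (N <= n)%N -> kabs (u m - u n) < e) ->
     exists l : kcarrier, forall e : R, 0 < e -> exists N : nat, forall m : nat,
         (N <= m)%N -> kabs (u m - l) < e
}.

Definition expansion (O : localInt) (pi : O) (S : O -> Prop)
    (d : nat -> O) (x : O) : Prop :=
  (forall i, S (d i)) /\
  forall n : nat, dvdR (pi ^+ n) (x - \sum_(i < n) d i * pi ^+ i).

Definition phi_t (O : localInt) (pi : O) (S : O -> Prop) (x : O) : O :=
  epsilon (inhabits (0 : O))
    (fun y => exists d, expansion pi S d x /\ expansion pi S (fun i => d i.+1) y).

Definition Obar (I : finType) (O : I -> localInt) := forall t : I, O t.

Definition negO (I : finType) (O : I -> localInt) (x : Obar O) : Obar O :=
  fun t => - x t.

Definition phi (I : finType) (O : I -> localInt) (pi : forall t, O t)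
    (S : forall t, O t -> Prop) (x : Obar O) : Obar O :=
  fun t => phi_t (pi t) (S t) (x t).

(* continuity for the product of the unif-adic topologies *)
Definition continuousO (I : finType) (O : I -> localInt) (R : realType)
    (K : naField R) (f : Obar O -> K) : Prop :=
  forall x : Obar O, forall e : R, 0 < e -> exists N : nat,
    forall y : Obar O, (forall t, dvdR (unif (O t) ^+ N) (y t - x t)) ->
      kabs (f y - f x) < e.

Definition nonvanishing (I : finType) (O : I -> localInt) (R : realType)
    (K : naField R) (f : Obar O -> K) : Prop :=
  forall x, f x <> 0.

(* Main.v *)
Require Import Defs.
From mathcomp Require Import all_boot all_order all_algebra.
From mathcomp Require Import reals.
From mathcomp Require Import ring lra zify.
From Stdlib Require Import ClassicalEpsilon FunctionalExtensionality Classical.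
Set Implicit Arguments. Unset Strict Implicit. Unset Printing Implicit Defensive.
Import Order.TTheory GRing.Theory Num.Theory.
Local Open Scope ring_scope.

Lemma minle_l (R : realType) (a b : R) : Num.min a b <= a.
Proof. by rewrite ge_min lexx. Qed.
Lemma minle_r (R : realType) (a b : R) : Num.min a b <= b.
Proof. by rewrite ge_min lexx orbT. Qed.

Section NA.
Variables (R : realType) (K : naField R).
Implicit Types (x y u v : K) (eps : R).

Lemma kabs1 : kabs (1 : K) = 1.
Proof.
have h := kabsM (1 : K) 1. rewrite mulr1 in h.
have nz : kabs (1 : K) != 0 by apply/eqP => /kabs_eq0 /eqP; rewrite oner_eq0.
by apply: (mulfI nz); rewrite mulr1 -h.
Qed.

Lemma kabs0 : kabs (0 : K) = 0.
Proof. by apply/kabs_eq0. Qed.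

Lemma kabsN x : kabs (- x) = kabs x.
Proof.
have h1 : kabs (-1 : K) = 1.
  have h := kabsM (-1 : K) (-1). rewrite mulrNN mulr1 kabs1 in h.
  have g := kabs_ge0 (-1 : K).
  nra.
by rewrite -mulN1r kabsM h1 mul1r.
Qed.

Lemma kabsB x y : kabs (x - y) = kabs (y - x).
Proof. by rewrite -kabsN opprB. Qed.

Lemma kabsV x : x != 0 -> kabs (x^-1) = (kabs x)^-1.
Proof.
move=> nx.
have h := kabsM x x^-1. rewrite mulfV // kabs1 in h.
have nz : kabs x != 0 by apply/eqP => /kabs_eq0 /eqP; rewrite (negbTE nx).
by apply: (mulfI nz); rewrite -h mulfV.
Qed.

Lemma kabs_gt0 x : x != 0 -> 0 < kabs x.
Proof.
move=> nx; rewrite lt_def kabs_ge0 andbT.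
by apply/eqP => /kabs_eq0 /eqP; rewrite (negbTE nx).
Qed.

Lemma kabsD_lt x y eps : kabs x < eps -> kabs y < eps -> kabs (x + y) < eps.
Proof.
move=> h1 h2; apply: (le_lt_trans (kabs_ultra x y)).
by rewrite gt_max h1 h2.
Qed.

Lemma kabsD_le x y eps : kabs x <= eps -> kabs y <= eps -> kabs (x + y) <= eps.
Proof.
move=> h1 h2; apply: (le_trans (kabs_ultra x y)).
by rewrite ge_max h1 h2.
Qed.

Lemma kabs_eq_near x y : kabs (x - y) < kabs y -> kabs x = kabs y.
Proof.
move=> h; apply/eqP; rewrite eq_le; apply/andP; split.
  have -> : x = (x - y) + y by rewrite subrK.
  by apply: (le_trans (kabs_ultra _ _)); rewrite ge_max (ltW h) lexx.
have e : y = x + - (x - y) by rewrite opprB addrCA subrr addr0.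
have := kabs_ultra x (- (x - y)); rewrite -e kabsN.
rewrite le_max => /orP [//|h2]; exfalso; move: (le_lt_trans h2 h); by rewrite ltxx.
Qed.

Definition near eps u := kabs (u - 1) < eps.

Lemma near_abs1 eps u : eps <= 1 -> near eps u -> kabs u = 1.
Proof.
move=> he h; rewrite -kabs1; apply: kabs_eq_near; rewrite kabs1.
exact: (lt_le_trans h he).
Qed.

Lemma near_neq0 eps u : eps <= 1 -> near eps u -> u != 0.
Proof.
move=> he h; apply/eqP => u0; move: (near_abs1 he h); rewrite u0 kabs0 => /eqP.
by rewrite eq_sym oner_eq0.
Qed.

Lemma near1 eps : 0 < eps -> near eps 1.
Proof. by rewrite /near subrr kabs0. Qed.

Lemma near_mul eps u v : eps <= 1 -> near eps u -> near eps v -> near eps (u * v).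
Proof.
move=> he hu hv; rewrite /near.
have -> : u * v - 1 = (u - 1) * v + (v - 1) by ring.
apply: kabsD_lt => //; by rewrite kabsM (near_abs1 he hv) mulr1.
Qed.

Lemma near_inv eps u : eps <= 1 -> near eps u -> near eps u^-1.
Proof.
move=> he hu; have nz := near_neq0 he hu; rewrite /near.
have -> : u^-1 - 1 = (1 - u) * u^-1 by rewrite mulrBl mulfV // mul1r.
rewrite kabsM kabsV // (near_abs1 he hu) invr1 mulr1 kabsB; exact hu.
Qed.

Lemma near_mon eps eps' u : eps <= eps' -> near eps u -> near eps' u.
Proof. by move=> h h1; apply: lt_le_trans h. Qed.

Lemma near_prod eps (I : Type) (r : seq I) (P : pred I) (f : I -> K) :
  0 < eps -> eps <= 1 -> (forall i, P i -> near eps (f i)) ->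
  near eps (\prod_(i <- r | P i) f i).
Proof.
move=> e0 e1 h; apply: (big_ind (near eps)) => //; first exact: near1.
by move=> a b; apply: near_mul.
Qed.

Lemma near_div eps a b : b != 0 -> near eps (a / b) <-> kabs (a - b) < eps * kabs b.
Proof.
move=> nb; rewrite /near.
have -> : a / b - 1 = (a - b) / b by rewrite mulrBl mulfV.
rewrite kabsM kabsV // ltr_pdivrMr //; exact: kabs_gt0.
Qed.

Lemma near_eq1 u : (forall eps, 0 < eps -> eps <= 1 -> near eps u) -> u = 1.
Proof.
move=> h; apply/eqP; rewrite -subr_eq0; apply/eqP; apply/kabs_eq0.
apply/eqP; rewrite eq_le kabs_ge0 andbT.
apply/negPn/negP; rewrite -ltNge => hp.
set m := Num.min (kabs (u - 1)) 1.
have m0 : 0 < m by rewrite lt_min hp ltr01.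
have := h m m0 (minle_r _ _).
rewrite /near => h2; have := lt_le_trans h2 (minle_l (kabs (u - 1)) 1).
by rewrite ltxx.
Qed.

End NA.

Lemma pigeon (C : finType) (P : C -> nat -> Prop) :
  (forall N, exists m, (N <= m)%N /\ exists c, P c m) ->
  exists c, forall N, exists m, (N <= m)%N /\ P c m.
Proof.
move=> hyp; apply: NNPP => hn.
have h : forall c, exists N, forall m, (N <= m)%N -> ~ P c m.
  move=> c; apply: NNPP => h2; apply: hn; exists c => N.
  apply: NNPP => h3; apply: h2; exists N => m hm hP; apply: h3; by exists m.
pose Nf c := epsilon (inhabits 0%N) (fun N => forall m, (N <= m)%N -> ~ P c m).
have hNf c : forall m, (Nf c <= m)%N -> ~ P c m.
  exact: (epsilon_spec (inhabits 0%N) (fun N => forall m, (N <= m)%N -> ~ P c m) (h c)).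
have [m [hm [c hc]]] := hyp (\max_c Nf c).
apply: (hNf c m _ hc); apply: leq_trans hm; exact: leq_bigmax.
Qed.

Section Livsic.
Variables (R : realType) (K : naField R).
Variables (X A : Type) (phi : X -> X) (D : X -> nat -> A) (V : A -> Prop)
  (mk : (nat -> A) -> X).
Hypotheses (DmK : forall w, (forall i, V (w i)) -> forall i, D (mk w) i = w i)
  (Dinj : forall x y, (forall i, D x i = D y i) -> x = y)
  (DV : forall x i, V (D x i))
  (Dphi : forall x i, D (phi x) i = D x i.+1).
Variables (C : finType) (cl : C -> A).
Hypothesis clS : forall a, V a -> exists c, cl c = a.
Variable x0 : X.

Definition agree m x y := forall i, (i < m)%N -> D x i = D y i.

Definition rcontA (f : X -> K) := forall x eps, 0 < eps -> eps <= 1 ->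
  exists m, forall y, agree m x y -> near eps (f y / f x).
Definition ucontA (f : X -> K) := forall eps, 0 < eps -> eps <= 1 ->
  exists m, forall x y, agree m x y -> near eps (f x / f y).

Lemma agree_mon m k x y : (m <= k)%N -> agree k x y -> agree m x y.
Proof. move=> hmk h i hi; apply: h; exact: leq_trans hi hmk. Qed.

Lemma compact_ucont f : rcontA f -> (forall x, f x != 0) -> ucontA f.
Proof.
move=> hc hnz eps e0 e1; apply: NNPP => hn.
pose Bad m x := exists y, agree m x y /\ ~ near eps (f x / f y).
have hB : forall m, exists x, Bad m x.
  move=> m; apply: NNPP => h1; apply: hn; exists m => x y hxy.
  apply: NNPP => h2; apply: h1; exists x, y; by split.
have [c0 _] := clS (DV x0 0).
pose Inf (s : seq C) := forall N, exists m, (N <= m)%N /\ exists x, Bad m x /\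
   forall i, (i < size s)%N -> D x i = cl (nth c0 s i).
have Inf0 : Inf [::] by move=> N; have [x hx] := hB N; exists N; split => //; exists x.
have Infs : forall s, Inf s -> exists c, Inf (rcons s c).
  move=> s hs; apply: pigeon => N.
  have [m [hm [x [hx hxs]]]] := hs N.
  have [c hcc] := clS (DV x (size s)).
  exists m; split => //; exists c, x; split => // i.
  rewrite size_rcons ltnS leq_eqVlt nth_rcons => /orP [/eqP ->|hi].
    by rewrite ltnn eqxx hcc.
  by rewrite hi; apply: hxs.
pose next s := epsilon (inhabits c0) (fun c => Inf (rcons s c)).
have hnext s : Inf s -> Inf (rcons s (next s)).
  move=> hs; exact: (epsilon_spec (inhabits c0) (fun c => Inf (rcons s c)) (Infs s hs)).
pose pref k := iter k (fun s => rcons s (next s)) [::].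
have size_pref k : size (pref k) = k by elim: k => //= k IH; rewrite size_rcons IH.
have Inf_pref k : Inf (pref k) by elim: k => //= k IH; apply: hnext.
have nth_pref k i : (i < k)%N -> nth c0 (pref k) i = nth c0 (pref i.+1) i.
  elim: k => // k IH; rewrite ltnS leq_eqVlt => /orP [/eqP ->//|hi].
  by rewrite /= nth_rcons size_pref hi IH.
pose w i := cl (nth c0 (pref i.+1) i).
have wV i : V (w i).
  have [m [_ [x [_ hx]]]] := Inf_pref i.+1 0%N.
  rewrite /w -hx ?size_pref //; exact: DV.
pose z := mk w.
have [m hm] := hc z eps e0 e1.
have [m' [hm' [x [[y [hxy hnear]] hx]]]] := Inf_pref m m.
have hzx : agree m z x.
  move=> i hi; rewrite DmK // hx ?size_pref // /w nth_pref //.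
have hzy : agree m z y.
  move=> i hi; rewrite hzx // hxy //; exact: leq_trans hi hm'.
apply: hnear.
have -> : f x / f y = (f x / f z) * (f y / f z)^-1.
  by rewrite invf_div mulrA mulrVK //; rewrite unitfE.
apply: near_mul => //; [exact: hm| apply: near_inv => //; exact: hm].
Qed.


Section Construction.
Variable F : X -> K.
Hypotheses (Fnz : forall x, F x != 0) (ucF : ucontA F)
  (hper : forall n x, iter n phi x = x -> \prod_(j < n) F (iter j phi x) = 1).

Let a := D x0 0.
Let aV : V a. Proof. exact: DV. Qed.

Lemma Diter x j i : D (iter j phi x) i = D x (i + j)%N.
Proof.
elim: j i => [|j IH] i /=; first by rewrite addn0.
by rewrite Dphi IH addSnnS.
Qed.

Lemma Diter_mk w j i : (forall i, V (w i)) -> D (iter j phi (mk w)) i = w (i + j)%N.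
Proof. by move=> hw; rewrite Diter DmK. Qed.

Let cst := mk (fun _ => a).
Lemma Fcst : F cst = 1.
Proof.
have hp : iter 1 phi cst = cst.
  apply: Dinj => i /=; rewrite Dphi !DmK //.
by have := hper hp; rewrite big_ord1.
Qed.

Definition ytr n x := mk (fun i => if (i < n)%N then D x i else a).
Lemma ytrV n x i : V (if (i < n)%N then D x i else a).
Proof. by case: ifP. Qed.

Definition Pn n x := \prod_(j < n) F (iter j phi (ytr n x)).

Lemma Pn_nz n x : Pn n x != 0.
Proof. by apply/prodf_neq0 => j _. Qed.

Definition per1 n x := mk (fun i => if (i %% (n.+1 + n) < n.+1)%N
   then D x (i %% (n.+1 + n)) else a).
Definition per2 n x := mk (fun i => if (i %% (n.+1 + n) < n)%N
   then D x (i %% (n.+1 + n)) else a).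
Lemma perV (k n : nat) x i : V (if (i %% (n.+1 + n) < k)%N
   then D x (i %% (n.+1 + n)) else a).
Proof. by case: ifP. Qed.

Lemma per1P n x : iter (n.+1 + n) phi (per1 n x) = per1 n x.
Proof. apply: Dinj => i; rewrite Diter_mk; last exact: perV.
by rewrite DmK; [rewrite modnDr | exact: perV].
Qed.
Lemma per2P n x : iter (n.+1 + n) phi (per2 n x) = per2 n x.
Proof. apply: Dinj => i; rewrite Diter_mk; last exact: perV.
by rewrite DmK; [rewrite modnDr | exact: perV].
Qed.

Lemma modP_small i P : (i < P)%N -> (i %% P = i)%N.
Proof. exact: modn_small. Qed.
Lemma modP_big i P : (P <= i)%N -> (i < P + P)%N -> (i %% P = i - P)%N.
Proof.
move=> h1 h2; have {1}-> : i = ((i - P) + P)%N by rewrite subnK.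
rewrite modnDr modn_small //; lia.
Qed.

Lemma ratio_near eps : 0 < eps -> eps <= 1 ->
  exists M, forall n x, (M <= n)%N -> near eps (Pn n.+1 x / Pn n x).
Proof.
move=> e0 e1; have [m hm] := ucF e0 e1.
exists m => n x hmn.
have hm' : forall u v, agree n.+1 u v -> near eps (F u / F v).
  move=> u v h; apply: hm; apply: agree_mon h; exact: leq_trans hmn _.
pose f1 (j : nat) := F (iter j phi (per1 n x)).
pose f2 (j : nat) := F (iter j phi (per2 n x)).
pose g1 (j : nat) := F (iter j phi (ytr n.+1 x)).
pose g2 (j : nat) := F (iter j phi (ytr n x)).
have e : (n.+1 + n = n + n.+1)%N by rewrite addSn addnS.
have h1 : (\prod_(j < n.+1) f1 j) * (\prod_(j < n) f1 (n.+1 + j)%N) = 1.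
  transitivity (\prod_(j < n.+1 + n) f1 j); last exact: hper (per1P n x).
  by rewrite big_split_ord.
have h2 : (\prod_(j < n) f2 j) * (f2 n * \prod_(j < n) f2 (n.+1 + j)%N) = 1.
  transitivity (\prod_(j < n.+1 + n) f2 j); last exact: hper (per2P n x).
  rewrite e big_split_ord big_ord_recl /= addn0.
  congr (_ * (_ * _)); apply: eq_bigr => j _; by rewrite addSnnS.
set A1 := \prod_(j < n.+1) _ in h1.
set T1 := \prod_(j < n) _ in h1.
set B2 := \prod_(j < n) _ in h2.
set T2 := \prod_(j < n) _ in h2.
set Y := f2 n in h2.
have T1nz : T1 != 0 by apply/prodf_neq0 => j _; exact: Fnz.
have T2nz : T2 != 0 by apply/prodf_neq0 => j _; exact: Fnz.
have Ynz : Y != 0 by exact: Fnz.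
have eA : A1 = T1^-1.
  by rewrite -[A1]mulr1 -(mulfV T1nz) mulrA h1 mul1r.
have eB : B2 = (Y * T2)^-1.
  by rewrite -[B2]mulr1 -(mulfV (mulf_neq0 Ynz T2nz)) mulrA h2 mul1r.
have X1 : near eps (Pn n.+1 x / A1).
  rewrite /Pn /A1 -prodf_div; apply: near_prod => // j _.
  apply: hm' => i hi; rewrite !Diter_mk; try (move=> ?; first [exact: perV| exact: ytrV]).
  rewrite (@modP_small (i + j)%N (n.+1 + n)%N); last by have := ltn_ord j; lia.
  done.
have X2 : near eps (Pn n x / B2).
  rewrite /Pn /B2 -prodf_div; apply: near_prod => // j _.
  apply: hm' => i hi; rewrite !Diter_mk; try (move=> ?; first [exact: perV| exact: ytrV]).
  rewrite (@modP_small (i + j)%N (n.+1 + n)%N); last by have := ltn_ord j; lia.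
  done.
have XY : near eps Y.
  rewrite -[Y]divr1 -Fcst; apply: hm' => i hi; rewrite Diter_mk; last exact: perV.
  rewrite DmK // (@modP_small (i + n)%N (n.+1 + n)%N); last by lia.
  case: ifP => ha //; lia.
have X3 : near eps (T2 / T1).
  rewrite /T1 /T2 -prodf_div; apply: near_prod => // j _.
  apply: hm' => i hi; rewrite !Diter_mk; try (move=> ?; exact: perV).
  have hj := ltn_ord j.
  case: (ltnP (i + (n.+1 + j)) (n.+1 + n)) => hc.
    rewrite (@modP_small (i + (n.+1 + j))%N (n.+1 + n)%N) //; case: ifP => ha; case: ifP => hb //; lia.
  rewrite (@modP_big (i + (n.+1 + j))%N (n.+1 + n)%N) //; last by lia.
  case: ifP => ha; case: ifP => hb //; lia.
have -> : Pn n.+1 x / Pn n x = (Pn n.+1 x / A1) * (Pn n x / B2)^-1 * (Y * (T2 / T1)).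
  rewrite eA eB; field.
  by rewrite T1nz T2nz Ynz oner_neq0 Pn_nz.
apply: (near_mul e1); last exact: (near_mul e1 XY X3).
apply: (near_mul e1 X1); exact: near_inv.
Qed.

Definition cvgK (u : nat -> K) l := forall eps, 0 < eps ->
  exists N, forall m, (N <= m)%N -> kabs (u m - l) < eps.

Lemma ratio_far eps : 0 < eps -> eps <= 1 ->
  exists M, forall l d x, (M <= l)%N -> near eps (Pn (l + d) x / Pn l x).
Proof.
move=> e0 e1; have [M hM] := ratio_near e0 e1.
exists M => l d x hl; elim: d => [|d IH].
  by rewrite addn0 divff ?Pn_nz //; exact: near1.
have -> : Pn (l + d.+1) x / Pn l x =
   (Pn (l + d).+1 x / Pn (l + d) x) * (Pn (l + d) x / Pn l x).
  by rewrite mulrA divfK ?Pn_nz // addnS.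
apply: near_mul => //; apply: hM; exact: leq_trans hl (leq_addr _ _).
Qed.

Definition M1 := epsilon (inhabits 0%N) (fun M => forall l d x, (M <= l)%N ->
   near 1 (Pn (l + d) x / Pn l x)).
Lemma M1P l d x : (M1 <= l)%N -> near 1 (Pn (l + d) x / Pn l x).
Proof.
have h := ratio_far (@ltr01 R) (lexx 1).
exact: (epsilon_spec (inhabits 0%N) (fun M => forall l d x, (M <= l)%N ->
   near 1 (Pn (l + d) x / Pn l x)) h).
Qed.

Lemma Pn_abs n x : (M1 <= n)%N -> kabs (Pn n x) = kabs (Pn M1 x).
Proof.
move=> hn; have := @M1P M1 (n - M1)%N x (leqnn M1).
rewrite subnKC // => h; have := near_abs1 (lexx 1) h.
rewrite kabsM kabsV ?Pn_nz // => h2.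
have nz : kabs (Pn M1 x) != 0 by rewrite gt_eqF // kabs_gt0 ?Pn_nz.
by rewrite -[LHS](divfK nz) h2 mul1r.
Qed.

Lemma close_bound eps : 0 < eps -> eps <= 1 ->
  exists M, (M1 <= M)%N /\ forall x m n, (M <= m)%N -> (M <= n)%N ->
    kabs (Pn m x - Pn n x) < eps * kabs (Pn M1 x).
Proof.
move=> e0 e1; have [Me hMe] := ratio_far e0 e1.
exists (maxn Me M1); split; first exact: leq_maxr.
move=> x m n hm hn.
have hmn : (maxn Me M1 <= minn m n)%N by rewrite leq_min hm hn.
have h1 : (Me <= minn m n)%N by apply: leq_trans hmn; exact: leq_maxl.
have h2 : (M1 <= minn m n)%N by apply: leq_trans hmn; exact: leq_maxr.
have key : forall k, (minn m n <= k)%N ->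
    kabs (Pn k x - Pn (minn m n) x) < eps * kabs (Pn M1 x).
  move=> k hk; have := hMe _ (k - minn m n)%N x h1.
  rewrite subnKC // near_div ?Pn_nz // Pn_abs //.
have -> : Pn m x - Pn n x = (Pn m x - Pn (minn m n) x) + - (Pn n x - Pn (minn m n) x).
  by rewrite opprB addrA subrK.
apply: kabsD_lt; rewrite ?kabsN; apply: key; [exact: geq_minl | exact: geq_minr].
Qed.

Definition G x := epsilon (inhabits 0) (cvgK (fun n => Pn n x)).

Lemma G_cvg x : cvgK (fun n => Pn n x) (G x).
Proof.
apply: (epsilon_spec (inhabits 0) (cvgK (fun n => Pn n x))).
apply: kcomplete => e e0.
have B0 : 0 < kabs (Pn M1 x) by rewrite kabs_gt0 ?Pn_nz.
pose eps := Num.min 1 (e / kabs (Pn M1 x)).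
have eps0 : 0 < eps by rewrite lt_min ltr01 divr_gt0.
have [M [_ hM]] := close_bound eps0 (minle_l _ _).
exists M => m n hm hn; apply: (lt_le_trans (hM x m n hm hn)).
by rewrite -ler_pdivlMr // minle_r.
Qed.

Lemma G_bound eps : 0 < eps -> eps <= 1 ->
  exists M, (M1 <= M)%N /\ forall x n, (M <= n)%N ->
    kabs (G x - Pn n x) < eps * kabs (Pn M1 x).
Proof.
move=> e0 e1; have [M [hM1 hM]] := close_bound e0 e1.
exists M; split => // x n hn.
have B0 : 0 < kabs (Pn M1 x) by rewrite kabs_gt0 ?Pn_nz.
have [N hN] := G_cvg x (mulr_gt0 e0 B0).
have hk1 := hN (maxn N n) (leq_maxl _ _).
have hk2 := hM x (maxn N n) n (leq_trans hn (leq_maxr _ _)) hn.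
have -> : G x - Pn n x = - (Pn (maxn N n) x - G x) + (Pn (maxn N n) x - Pn n x).
  by rewrite opprB addrA subrK.
by apply: kabsD_lt; rewrite ?kabsN.
Qed.

Lemma G_abs x : kabs (G x) = kabs (Pn M1 x).
Proof.
have [M [hM1 hM]] := G_bound (@ltr01 R) (lexx 1).
have h := hM x M (leqnn M); rewrite mul1r -(Pn_abs x hM1) in h.
by rewrite (kabs_eq_near h) Pn_abs.
Qed.

Lemma G_nz x : G x != 0.
Proof.
apply/eqP => h; have := G_abs x; rewrite h kabs0 => /esym /eqP.
by rewrite gt_eqF // kabs_gt0 ?Pn_nz.
Qed.

Lemma G_near eps : 0 < eps -> eps <= 1 ->
  exists M, forall x n, (M <= n)%N -> near eps (Pn n x / G x).
Proof.
move=> e0 e1; have [M [hM1 hM]] := G_bound e0 e1.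
exists M => x n hn; rewrite near_div ?G_nz // kabsB G_abs; exact: hM.
Qed.

Lemma ytr_agree n x y : agree n x y -> ytr n x = ytr n y.
Proof.
move=> h; apply: Dinj => i; rewrite !DmK; try (move=> ?; exact: ytrV).
by case: ifP => // hi; rewrite h.
Qed.

Lemma G_rcont : rcontA G.
Proof.
move=> x eps e0 e1; have [M hM] := G_near e0 e1.
exists M => y hxy.
have e : Pn M y = Pn M x by rewrite /Pn (ytr_agree hxy).
have h1 := hM x M (leqnn M); have h2 := hM y M (leqnn M); rewrite e in h2.
have -> : G y / G x = (Pn M x / G x) * (Pn M x / G y)^-1.
  field; by rewrite !G_nz Pn_nz.
apply: near_mul => //; exact: near_inv.
Qed.

Lemma Pn_rec n x : Pn n.+1 x = F (ytr n.+1 x) * Pn n (phi x).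
Proof.
rewrite /Pn big_ord_recl /=; congr (_ * _); apply: eq_bigr => j _.
rewrite add0n -iterS iterSr; congr (F (iter _ phi _)).
apply: Dinj => i; rewrite Dphi !DmK; try (move=> ?; exact: ytrV).
by rewrite ltnS Dphi.
Qed.

Lemma G_cob x : G x = F x * G (phi x).
Proof.
suff h : (F x * G (phi x)) / G x = 1.
  by rewrite -[RHS](divfK (G_nz x)) h mul1r.
apply: near_eq1 => eps e0 e1.
have [M hM] := G_near e0 e1; have [m hm] := ucF e0 e1.
pose n := maxn M m.
have hy : near eps (F x / F (ytr n.+1 x)).
  apply: hm => i hi; rewrite DmK; last exact: ytrV.
  by rewrite (leq_trans hi (leq_trans (leq_maxr M m) (leqnSn _))).
have h1 := hM x n.+1 (leq_trans (leq_maxl M m) (leqnSn n)).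
have h2 := hM (phi x) n (leq_maxl M m).
have -> : F x * G (phi x) / G x =
  (F x / F (ytr n.+1 x)) * (Pn n (phi x) / G (phi x))^-1 * (Pn n.+1 x / G x).
  rewrite Pn_rec; field.
  by rewrite Fnz G_nz Pn_nz G_nz.
apply: (near_mul e1) => //; apply: (near_mul e1 hy); exact: near_inv.
Qed.

Lemma livsic : exists G : X -> K, (forall x, G x != 0) /\ rcontA G /\
  forall x, G x = F x * G (phi x).
Proof. exists G; split; [exact: G_nz | split; [exact: G_rcont | exact: G_cob]]. Qed.

End Construction.
End Livsic.

Section Dvd.
Variable (T : comRingType).
Implicit Types a b c : T.
Lemma dvdR_refl a : dvdR a a. Proof. by exists 1; rewrite mul1r. Qed.
Lemma dvdR0 a : dvdR a 0. Proof. by exists 0; rewrite mul0r. Qed.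
Lemma dvdR_add a b c : dvdR a b -> dvdR a c -> dvdR a (b + c).
Proof. by move=> [u ->] [v ->]; exists (u + v); rewrite mulrDl. Qed.
Lemma dvdR_opp a b : dvdR a b -> dvdR a (- b).
Proof. by move=> [u ->]; exists (- u); rewrite mulNr. Qed.
Lemma dvdR_sub a b c : dvdR a b -> dvdR a c -> dvdR a (b - c).
Proof. by move=> h1 h2; apply: dvdR_add => //; apply: dvdR_opp. Qed.
Lemma dvdR_mull a b c : dvdR a b -> dvdR a (c * b).
Proof. by move=> [u ->]; exists (c * u); rewrite mulrA. Qed.
Lemma dvdR_trans a b c : dvdR a b -> dvdR b c -> dvdR a c.
Proof. by move=> [u ->] [v ->]; exists (v * u); rewrite mulrA. Qed.
Lemma dvdR_exp a m n : (m <= n)%N -> dvdR (a ^+ m) (a ^+ n).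
Proof. by move=> h; exists (a ^+ (n - m)); rewrite -exprD subnK. Qed.
Lemma dvdR_mulr a b : dvdR a (b * a). Proof. by exists b. Qed.
Lemma dvdR_swap a b c : dvdR a (b - c) -> dvdR a (c - b).
Proof. by move=> h; rewrite -opprB; apply: dvdR_opp. Qed.
End Dvd.

Lemma dvdR_cancel (T : idomainType) (a b p : T) : p != 0 -> dvdR (a * p) (b * p) -> dvdR a b.
Proof. by move=> pn [c h]; exists c; apply: (mulIf pn); rewrite h mulrA. Qed.

Section Digits.
Variables (L : localInt) (e : nat) (he : (0 < e)%N) (p : L)
  (hp : p = unif L ^+ e) (S : L -> Prop)
  (hS : forall x : L, exists s, (S s /\ dvdR p (x - s)) /\
          forall s', S s' /\ dvdR p (x - s') -> s' = s).

Lemma pnz : p != 0.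
Proof. by rewrite hp expf_neq0 // unif_neq0. Qed.

Lemma pexp n : p ^+ n = unif L ^+ (e * n).
Proof. by rewrite hp exprM. Qed.

Lemma unif_dvd_p n : dvdR (unif L ^+ n) (p ^+ n).
Proof. rewrite pexp; apply: dvdR_exp; rewrite leq_pmull //. Qed.

Lemma krull (z : L) : (forall n, dvdR (p ^+ n) z) -> z = 0.
Proof.
move=> h; apply: NNPP => /eqP hz.
have [u [k [uu ez]]] := unif_dvr hz.
have [c hc] : dvdR (unif L ^+ k.+1) z.
  apply: dvdR_trans (h k.+1); exact: unif_dvd_p.
have : u = c * unif L.
  apply: (mulIf (expf_neq0 k (unif_neq0 L))); by rewrite -ez hc exprS mulrA.
move=> eu; rewrite eu unitrM in uu; move/andP: uu => [_ uu].
by move: (unif_nonunit L); rewrite uu.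
Qed.

Definition rep (x : L) := epsilon (inhabits 0) (fun s => S s /\ dvdR p (x - s)).
Lemma rep_spec x : S (rep x) /\ dvdR p (x - rep x).
Proof.
apply: (epsilon_spec (inhabits 0) (fun s => S s /\ dvdR p (x - s))).
by have [s [hs _]] := hS x; exists s.
Qed.
Lemma rep_uniq x s : S s -> dvdR p (x - s) -> s = rep x.
Proof.
move=> h1 h2; have [s0 [_ hu]] := hS x.
by rewrite (hu s (conj h1 h2)) (hu (rep x) (rep_spec x)).
Qed.

Definition quo (x : L) := epsilon (inhabits 0) (fun c => x - rep x = c * p).
Lemma quo_spec x : x - rep x = quo x * p.
Proof.
apply: (epsilon_spec (inhabits 0) (fun c => x - rep x = c * p)).
by have [_ [c hc]] := rep_spec x; exists c.
Qed.

Definition dig (x : L) i := rep (iter i quo x).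

Lemma dig_S x i : dig x i.+1 = dig (quo x) i.
Proof. by rewrite /dig iterSr. Qed.
Lemma dig0 x : dig x 0 = rep x. Proof. by []. Qed.

Lemma dig_exp x n : x - \sum_(i < n) dig x i * p ^+ i = iter n quo x * p ^+ n.
Proof.
elim: n x => [|n IH] x; first by rewrite big_ord0 subr0 expr0 mulr1.
rewrite big_ord_recl /= expr0 mulr1 dig0.
have -> : \sum_(i < n) dig x (bump 0 i) * p ^+ bump 0 i =
   (\sum_(i < n) dig (quo x) i * p ^+ i) * p.
  rewrite mulr_suml; apply: eq_bigr => i _.
  by rewrite /bump /= add1n dig_S exprS; ring.
have -> : x - (rep x + (\sum_(i < n) dig (quo x) i * p ^+ i) * p) =
   (quo x - \sum_(i < n) dig (quo x) i * p ^+ i) * p.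
  by rewrite mulrBl -quo_spec; ring.
by rewrite IH -iterS iterSr exprSr mulrA.
Qed.

Lemma dig_expansion x : expansion p S (dig x) x.
Proof.
split; first by move=> i; exact: (rep_spec _).1.
move=> n; rewrite dig_exp; exact: dvdR_mulr.
Qed.

Lemma exp_uniq i : forall d x, expansion p S d x -> d i = dig x i.
Proof.
elim: i => [|i IH] d x [hd hx].
  apply: rep_uniq => //; have := hx 1%N; by rewrite big_ord1 expr1 expr0 mulr1.
have d0 : d 0%N = rep x.
  apply: rep_uniq => //; have := hx 1%N; by rewrite big_ord1 expr1 expr0 mulr1.
rewrite dig_S; apply: (IH (fun i => d i.+1)); split => // n.
apply: (@dvdR_cancel _ _ _ p pnz); rewrite -exprSr.
have := hx n.+1; rewrite big_ord_recl /= expr0 mulr1 d0.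
congr dvdR; rewrite mulrBl -quo_spec mulr_suml.
have -> : \sum_(i0 < n) d (bump 0 i0) * p ^+ bump 0 i0 =
   \sum_(i < n) d i.+1 * p ^+ i * p.
  by apply: eq_bigr => j _; rewrite /bump /= add1n exprS; ring.
ring.
Qed.

Lemma agree_dvd x y n : (forall i, (i < n)%N -> dig x i = dig y i) ->
  dvdR (p ^+ n) (x - y).
Proof.
move=> h.
have -> : x - y = (x - \sum_(i < n) dig x i * p ^+ i) - (y - \sum_(i < n) dig y i * p ^+ i).
  have -> : \sum_(i < n) dig x i * p ^+ i = \sum_(i < n) dig y i * p ^+ i.
    by apply: eq_bigr => i _; rewrite h.
  ring.
by rewrite !dig_exp -mulrBl; exact: dvdR_mulr.
Qed.

Lemma dvd_agree n : forall x y, dvdR (p ^+ n) (x - y) ->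
  forall i, (i < n)%N -> dig x i = dig y i.
Proof.
elim: n => // n IH x y h.
have h1 : dvdR p (x - y) by apply: dvdR_trans h; rewrite -{1}(expr1 p); apply: dvdR_exp.
have er : rep x = rep y.
  apply/esym; apply: rep_uniq; first exact: (rep_spec y).1.
  have -> : x - rep y = (x - y) + (y - rep y) by ring.
  apply: dvdR_add => //; exact: (rep_spec y).2.
have hq : dvdR (p ^+ n) (quo x - quo y).
  apply: (@dvdR_cancel _ _ _ p pnz); rewrite -exprSr mulrBl -!quo_spec er.
  by have -> : x - rep y - (y - rep y) = x - y by ring.
case=> [_|i hi]; first by rewrite !dig0 er.
by rewrite !dig_S; apply: IH.
Qed.

Lemma dig_inj x y : (forall i, dig x i = dig y i) -> x = y.
Proof.
move=> h; apply/eqP; rewrite -subr_eq0; apply/eqP; apply: krull => n.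
by apply: agree_dvd => i _.
Qed.

Lemma decode_ex (w : nat -> L) : (forall i, S (w i)) -> exists x, expansion p S w x.
Proof.
move=> hw.
pose s (n : nat) := \sum_(i < n) w i * p ^+ i.
have hs : forall N m, (N <= m)%N -> dvdR (p ^+ N) (s m - s N).
  move=> N m /subnK <-; elim: (m - N)%N => [|k IH]; first by rewrite add0n subrr; exact: dvdR0.
  rewrite addSn /s big_ord_recr /=.
  have -> : \sum_(i < k + N) w i * p ^+ i + w (k + N)%N * p ^+ (k + N) -
     \sum_(i < N) w i * p ^+ i = (s (k + N)%N - s N) + w (k + N)%N * p ^+ (k + N) by rewrite /s; ring.
  apply: dvdR_add => //; apply: dvdR_mull; apply: dvdR_exp; exact: leq_addl.
have [l hl] : exists l, forall n, exists N, forall m, (N <= m)%N ->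
    dvdR (unif L ^+ n) (s m - l).
  apply: unif_complete => n; exists n => m hm.
  apply: dvdR_trans (hs n m hm); exact: unif_dvd_p.
exists l; split => // n.
have [N hN] := hl (e * n)%N.
have h1 := hN (maxn N n) (leq_maxl _ _).
have h2 := hs n (maxn N n) (leq_maxr _ _).
rewrite -pexp in h1.
have -> : l - \sum_(i < n) w i * p ^+ i = (s (maxn N n) - s n) - (s (maxn N n) - l) by rewrite /s; ring.
exact: dvdR_sub.
Qed.

Definition dec (w : nat -> L) := epsilon (inhabits 0) (expansion p S w).
Lemma dec_dig w : (forall i, S (w i)) -> forall i, dig (dec w) i = w i.
Proof.
move=> hw i; symmetry; apply: exp_uniq.
exact: (epsilon_spec (inhabits 0) (expansion p S w) (decode_ex hw)).
Qed.

Lemma phi_dig x i : dig (phi_t p S x) i = dig x i.+1.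
Proof.
have ex : exists y, exists d, expansion p S d x /\ expansion p S (fun i => d i.+1) y.
  have [y hy] := decode_ex (fun i => (rep_spec (iter i.+1 quo x)).1).
  by exists y, (dig x); split => //; exact: dig_expansion.
have [d [h1 h2]] := epsilon_spec (inhabits (0 : L)) _ ex.
rewrite -/(phi_t p S x) in h2.
by rewrite -(exp_uniq i h2) (exp_uniq i.+1 h1).
Qed.

Lemma resid_fin k : exists s : seq L, forall x, exists2 a, a \in s & dvdR (unif L ^+ k) (x - a).
Proof.
elim: k => [|k [s hs]].
  by exists [:: 0] => x; exists 0; rewrite ?inE // expr0; exists (x - 0); rewrite mulr1.
have [s1 hs1] := residue_finite L.
exists [seq a + b * unif L ^+ k | a <- s, b <- s1] => x.
have [a ha [c hc]] := hs x.
have [b hb [c' hc']] := hs1 c.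
exists (a + b * unif L ^+ k); first by apply/allpairsP; exists (a, b).
exists c'; rewrite exprSr.
have -> : x - (a + b * unif L ^+ k) = (x - a) - b * unif L ^+ k by ring.
rewrite hc; have -> : c = c' * unif L + b by rewrite -hc' subrK.
ring.
Qed.

Lemma S_fin : exists s : seq L, forall x, S x -> x \in s.
Proof.
have [s hs] := resid_fin e.
exists (map rep s) => x hx.
have [a ha hd] := hs x; rewrite -hp in hd.
apply/mapP; exists a => //; apply: rep_uniq => //; exact: dvdR_swap.
Qed.

End Digits.

Section RC.
Variables (R : realType) (K : naField R) (X : Type).
Definition rcont (cl : nat -> X -> X -> Prop) (f : X -> K) :=
  forall x eps, 0 < eps -> eps <= 1 ->
  exists N, forall y, cl N x y -> near eps (f y / f x).

Lemma rcont_mul cl (f g : X -> K) :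
  (forall N N' x y, (N <= N')%N -> cl N' x y -> cl N x y) ->
  rcont cl f -> rcont cl g -> rcont cl (fun x => f x * g x).
Proof.
move=> hm hf hg x eps e0 e1.
have [N1 h1] := hf x eps e0 e1; have [N2 h2] := hg x eps e0 e1.
exists (maxn N1 N2) => y hy.
have -> : f y * g y / (f x * g x) = (f y / f x) * (g y / g x).
  by rewrite invfM; ring.
apply: near_mul => //; [apply: h1 | apply: h2]; apply: hm hy;
  [exact: leq_maxl | exact: leq_maxr].
Qed.

Lemma rcont_inv cl (f : X -> K) : rcont cl f -> rcont cl (fun x => (f x)^-1).
Proof.
move=> hf x eps e0 e1; have [N h] := hf x eps e0 e1.
exists N => y hy; rewrite invrK mulrC -invf_div; apply: near_inv => //; exact: h.
Qed.
End RC.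

Lemma rcont_comp (R : realType) (K : naField R) (X Y : Type) (cl1 : nat -> Y -> Y -> Prop) (cl2 : nat -> X -> X -> Prop)
  (h : X -> Y) (f : Y -> K) :
  (forall x N, exists N', forall y, cl2 N' x y -> cl1 N (h x) (h y)) ->
  rcont cl1 f -> rcont cl2 (fun x => f (h x)).
Proof.
move=> hh hf x eps e0 e1; have [N hN] := hf (h x) eps e0 e1.
have [N' hN'] := hh x N; exists N' => y hy; exact: hN (hN' _ hy).
Qed.


Section ObarSec.
Unset Implicit Arguments.
Variables (I : finType) (O : I -> localInt)
  (e : I -> nat) (he : forall t, (0 < e t)%N)
  (pi : forall t, O t) (hpi : forall t, pi t = unif (O t) ^+ e t)
  (S : forall t, O t -> Prop)
  (hS : forall t (x : O t), exists s, (S t s /\ dvdR (pi t) (x - s)) /\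
          forall s', S t s' /\ dvdR (pi t) (x - s') -> s' = s).
Set Implicit Arguments.

Definition digO (x : Obar O) i : Obar O := fun t => dig (pi t) (S t) (x t) i.
Definition mkO (w : nat -> Obar O) : Obar O := fun t => dec (pi t) (S t) (fun i => w i t).
Definition VO (a : Obar O) := forall t, S t (a t).

Lemma DmK w : (forall i, VO (w i)) -> forall i, digO (mkO w) i = w i.
Proof.
move=> hw i; apply: functional_extensionality_dep => t.
rewrite /digO /mkO (dec_dig (he t) (hpi t) (hS t)) // => j; exact: hw.
Qed.

Lemma Dinj x y : (forall i, digO x i = digO y i) -> x = y.
Proof.
move=> h; apply: functional_extensionality_dep => t.
apply: (dig_inj (he t) (hpi t) (hS t)) => i.
exact: (f_equal (fun f => f t) (h i)).
Qed.

Lemma DV x i : VO (digO x i).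
Proof. move=> t; exact: (rep_spec (hS t) _).1. Qed.

Lemma Dphi x i : digO (phi pi S x) i = digO x i.+1.
Proof.
apply: functional_extensionality_dep => t.
exact: (phi_dig (he t) (hpi t) (hS t)).
Qed.

Definition Ls t := epsilon (inhabits [::]) (fun s : seq (O t) => forall x, S t x -> x \in s).
Lemma LsP t x : S t x -> x \in Ls t.
Proof.
move: x; apply: (epsilon_spec (inhabits [::]) (fun s : seq (O t) => forall x, S t x -> x \in s)).
exact: (S_fin (hpi t) (hS t)).
Qed.

Definition MM := \max_t size (Ls t).
Definition clO (c : {ffun I -> 'I_MM.+1}) : Obar O := fun t => nth 0 (Ls t) (c t).

Lemma clOS a : VO a -> exists c, clO c = a.
Proof.
move=> ha; exists [ffun t => inord (index (a t) (Ls t))].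
apply: functional_extensionality_dep => t; rewrite /clO ffunE inordK.
  by rewrite nth_index //; apply: LsP.
rewrite ltnS /MM; apply: (leq_trans _ (leq_bigmax (F := fun t => size (Ls t)) t)).
by apply: ltnW; rewrite index_mem; apply: LsP.
Qed.

Definition closeU N (x y : Obar O) := forall t, dvdR (unif (O t) ^+ N) (y t - x t).

Lemma closeU_mon N N' x y : (N <= N')%N -> closeU N' x y -> closeU N x y.
Proof. move=> h hc t; apply: dvdR_trans (hc t); exact: dvdR_exp. Qed.

Lemma closeU_refl N x : closeU N x x.
Proof. by move=> t; rewrite subrr; apply: dvdR0. Qed.

Lemma agree_close m x y : agree digO m x y -> closeU m x y.
Proof.
move=> h t; apply: dvdR_trans (unif_dvd_p (he t) (hpi t) m) _.
apply: dvdR_swap; apply: (agree_dvd (hS t)) => i hi.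
exact: (f_equal (fun f => f t) (h i hi)).
Qed.

Definition Emax := \max_t e t.

Lemma close_agree m x y : closeU (Emax * m) x y -> agree digO m x y.
Proof.
move=> h i hi; apply: functional_extensionality_dep => t; apply/esym.
apply: (dvd_agree (hpi t) (hS t) _ hi).
apply: dvdR_trans (h t); rewrite (pexp (hpi t)); apply: dvdR_exp.
by apply: leq_mul => //; exact: leq_bigmax.
Qed.

Lemma closeU_neg N x y : closeU N x y -> closeU N (negO x) (negO y).
Proof.
move=> h t; rewrite /negO; have -> : - y t - - x t = - (y t - x t) by ring.
exact: dvdR_opp (h t).
Qed.

Lemma negK (x : Obar O) : negO (negO x) = x.
Proof. apply: functional_extensionality_dep => t; by rewrite /negO opprK. Qed.

Lemma agree_phi N x y : agree digO N.+1 x y -> agree digO N (phi pi S x) (phi pi S y).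
Proof. move=> h i hi; rewrite !Dphi; exact: h. Qed.

Lemma psi_close x N : exists N', forall y, closeU N' x y ->
  closeU N (negO (phi pi S (negO x))) (negO (phi pi S (negO y))).
Proof.
exists (Emax * N.+1)%N => y hy; apply: closeU_neg; apply: agree_close.
apply: agree_phi; apply: close_agree; exact: closeU_neg.
Qed.

Variables (R : realType) (K : naField R).

Lemma cont_rcont (f : Obar O -> K) : continuousO f -> nonvanishing f -> rcont closeU f.
Proof.
move=> hc hn x eps e0 e1.
have fx : f x != 0 by apply/eqP; exact: hn.
have [N hN] := hc x (eps * kabs (f x)) (mulr_gt0 e0 (kabs_gt0 fx)).
exists N => y hy; rewrite near_div //; exact: hN.
Qed.

Lemma rcont_cont (f : Obar O -> K) : nonvanishing f -> rcont closeU f -> continuousO f.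
Proof.
move=> hn hr x e0 he0.
have fx : f x != 0 by apply/eqP; exact: hn.
have B0 := kabs_gt0 fx.
pose eps := Num.min 1 (e0 / kabs (f x)).
have eps0 : 0 < eps by rewrite lt_min ltr01 divr_gt0.
have [N hN] := hr x eps eps0 (minle_l _ _).
exists N => y hy; have := hN y hy; rewrite near_div // => h.
apply: (lt_le_trans h); by rewrite -ler_pdivlMr // minle_r.
Qed.

End ObarSec.

Lemma telescope (R : realType) (K : naField R) (g : nat -> K) n :
  (forall j, g j != 0) -> \prod_(j < n) (g j / g j.+1) = g 0%N / g n.
Proof.
move=> hg; elim: n => [|n IH]; first by rewrite big_ord0 divff.
rewrite big_ord_recr /= IH mulrA divfK //.
Qed.

Unset Implicit Arguments.

Theorem mainTheorem5 (I : finType) (O : I -> localInt)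
  (e : I -> nat) (he : forall t, (0 < e t)%N)
  (pi : forall t, O t) (hpi : forall t, pi t = unif (O t) ^+ e t)
  (S : forall t, O t -> Prop)
  (hS : forall t (x : O t), exists s, (S t s /\ dvdR (pi t) (x - s)) /\
          forall s', S t s' /\ dvdR (pi t) (x - s') -> s' = s)
  (R : realType) (K : naField R) (Gam : Obar O -> K)
  (hGc : continuousO Gam) (hGn : nonvanishing Gam) (H : Obar O -> K) :
  (continuousO H /\ nonvanishing H /\
    forall (n : nat) (x : Obar O),
      iter n (phi pi S) (negO x) = negO x ->
      \prod_(j < n) Gam (negO (iter j (phi pi S) (negO x))) =
      \prod_(j < n) H (negO (iter j (phi pi S) (negO x))))
  <->
  (exists G : Obar O -> K, continuousO G /\ nonvanishing G /\
     forall x : Obar O, H x = Gam x * (G x / G (negO (phi pi S (negO x))))).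
Proof.
have hDmK := DmK he hpi hS.
have hDinj := Dinj he hpi hS.
have hDV := DV hS.
have hDphi := Dphi he hpi hS.
have hclS := clOS hpi hS.
pose x0 : Obar O := fun t => 0.
have negclose : forall x N, exists N', forall y, agree (digO pi S) N' x y ->
    closeU N (negO x) (negO y).
  move=> x N; exists N => y hy; apply: closeU_neg; exact: (agree_close he hpi hS hy).
have Gamnz : forall x, Gam x != 0 by move=> x; apply/eqP; exact: hGn.
split.
- move=> [hHc [hHn hprod]].
  have Hnz : forall x, H x != 0 by move=> x; apply/eqP; exact: hHn.
  have rcG : rcontA (digO pi S) (fun u => Gam (negO u)).
    exact: (rcont_comp negclose (cont_rcont hGc hGn)).
  have rcH : rcontA (digO pi S) (fun u => H (negO u)).
    exact: (rcont_comp negclose (cont_rcont hHc hHn)).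
  have ucG := compact_ucont hDmK hDV hclS x0 rcG (fun u => Gamnz _).
  have ucH := compact_ucont hDmK hDV hclS x0 rcH (fun u => Hnz _).
  pose F u := H (negO u) / Gam (negO u).
  have Fnz : forall u, F u != 0 by move=> u; rewrite /F mulf_neq0 ?invr_eq0.
  have ucF : ucontA (digO pi S) F.
    move=> eps e0 e1; have [m1 h1] := ucH eps e0 e1; have [m2 h2] := ucG eps e0 e1.
    exists (maxn m1 m2) => x y hxy.
    have -> : F x / F y = (H (negO x) / H (negO y)) * (Gam (negO x) / Gam (negO y))^-1.
      rewrite /F; field; by rewrite !Gamnz !Hnz.
    apply: near_mul => //; last apply: near_inv => //.
      apply: h1; apply: agree_mon hxy; exact: leq_maxl.
    apply: h2; apply: agree_mon hxy; exact: leq_maxr.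
  have hper : forall n u, iter n (phi pi S) u = u ->
      \prod_(j < n) F (iter j (phi pi S) u) = 1.
    move=> n u hu; have := hprod n (negO u); rewrite !negK => /(_ hu) hp.
    rewrite /F prodf_div hp divff //; by apply/prodf_neq0 => j _.
  have [G0 [G0nz [G0c G0cob]]] := livsic hDmK hDinj hDV hDphi x0 Fnz ucF hper.
  exists (fun x => G0 (negO x)); split; [|split].
  + apply: rcont_cont; first by move=> x; apply/eqP.
    apply: (rcont_comp _ G0c) => x N; exists (Emax e * N)%N => y hy.
    apply: (close_agree hpi hS); exact: closeU_neg.
  + by move=> x; apply/eqP.
  + move=> x; rewrite negK.
    have := G0cob (negO x); rewrite /F negK => ->.
    field; by rewrite G0nz Gamnz.
- move=> [G [hGc' [hGn' hH]]].
  have Gnz : forall x, G x != 0 by move=> x; apply/eqP; exact: hGn'.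
  have eH : H = fun x => Gam x * (G x * (G (negO (phi pi S (negO x))))^-1).
    by apply: functional_extensionality => x; rewrite hH.
  have Hnz : forall x, H x != 0.
    by move=> x; rewrite hH mulf_neq0 // mulf_neq0 // invr_eq0.
  split; [|split].
  + apply: rcont_cont; first by move=> x; apply/eqP.
    rewrite eH; apply: rcont_mul; first exact: closeU_mon.
      exact: cont_rcont.
    apply: rcont_mul; first exact: closeU_mon.
      exact: cont_rcont.
    apply: rcont_inv; apply: (rcont_comp _ (cont_rcont hGc' hGn')).
    exact: psi_close.
  + by move=> x; apply/eqP.
  + move=> n x hx.
    rewrite [RHS](eq_bigr (fun j : 'I_n => Gam (negO (iter j (phi pi S) (negO x))) *
       (G (negO (iter j (phi pi S) (negO x))) / G (negO (iter j.+1 (phi pi S) (negO x)))))); last first.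
      by move=> j _; rewrite hH negK.
    rewrite big_split /= (@telescope _ _ (fun j => G (negO (iter j (phi pi S) (negO x)))) n (fun j => Gnz _)).
    by rewrite hx /= divff ?mulr1.
Qed.
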